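(* Let $s\ge 1$ and let $P^{(1)},\dots,P^{(s)}\in\mathbb{C}[z_1,\dots,z_d]$ be nonzero polynomials of total degrees $n_1,\dots,n_s$ respectively. Then \[ (n_1+\cdots+n_s)!\,\bigl\|P^{(1)}\cdots P^{(s)}\bigr\|_a^2\;\ge\;\bigl\|P^{(1)}\bigr\|_a^2\cdots\bigl\|P^{(s)}\bigr\|_a^2 . \]
   Context: For multi-indices $\alpha=(\alpha_1,\dots,\alpha_d)\in\mathbb{N}^d$ write $z^\alpha=z_1^{\alpha_1}\cdots z_d^{\alpha_d}$, $\alpha!=\alpha_1!\cdots\alpha_d!$, $|\alpha|=\alpha_1+\cdots+\alpha_d$. The apolar inner product on $\mathbb{C}[z_1,\dots,z_d]$ is defined, for $P=\sum_\alpha c_\alpha z^\alpha$ and $Q=\sum_\alpha d_\alpha z^\alpha$, by $\langle P,Q\rangle_a=\sum_{\alpha\in\mathbb{N}^d}\alpha!\,c_\alpha\overline{d_\alpha}$, and $\|P\|_a=\sqrt{\langle P,P\rangle_a}$. The total degree of $P$ is the largest $|\alpha|$ with $c_\alpha\neq0$. *)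

(* Defs.v *)
From mathcomp Require Import all_boot all_algebra.
From mathcomp Require Import complex.
From mathcomp Require Import Rstruct.
From mathcomp Require Import mpoly.
Import GRing.Theory Num.Theory.

Set Implicit Arguments. Unset Strict Implicit. Unset Printing Implicit Defensive.

Local Open Scope ring_scope.

Definition C := (Rdefinitions.R)[i].

Definition mfact (d : nat) (m : 'X_{1..d}) : nat := (\prod_(i < d) (m i)`!)%N.

(* apolar inner product <P,Q>_a = sum_alpha alpha! c_alpha conj(d_alpha);
   terms with alpha outside the support of P vanish, so summing over
   msupp P is exactly the full sum. *)
Definition apolar_inner (d : nat) (P Q : {mpoly C[d]}) : C :=
  \sum_(m <- msupp P) (mfact m)%:R * P@_m * (Q@_m)^*.

Definition apolar_norm (d : nat) (P : {mpoly C[d]}) : C :=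
  sqrtC (apolar_inner P P).

(* total degree of P (for P <> 0): msize P = 1 + max |alpha| over the support *)
Definition tdeg (d : nat) (P : {mpoly C[d]}) : nat := (msize P).-1.

(* Main.v *)
Require Import Defs.
From mathcomp Require Import all_boot all_order all_algebra.
From mathcomp Require Import complex.
From mathcomp Require Import Rstruct.
From mathcomp Require Import mpoly ssrcomplements.
From mathcomp Require Import ring lra zify.
Import Order.TTheory GRing.Theory Num.Theory.
Set Implicit Arguments. Unset Strict Implicit. Unset Printing Implicit Defensive.
Local Open Scope ring_scope.

Section Core.
Variable F : numClosedFieldType.

Definition vc (b g' a m : nat) : F :=
  if (a <= g')%N && (b + a == g' + m)%N then (b`! * g'`!)%:R / ((g' - a)`!)%:R else 0.

Lemma fact_neq0 n : (n`!)%:R != 0 :> F.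
Proof. by rewrite pnatr_eq0 -lt0n fact_gt0. Qed.

Lemma sum_single (B : nat) (G : nat -> F) m0 : (m0 < B)%N ->
  (forall m, m != m0 -> G m = 0) -> \sum_(m < B) G m = G m0.
Proof.
move=> hB h; rewrite (bigD1 (Ordinal hB)) //= big1 ?addr0 // => i /eqP hi.
apply: h; apply/eqP => e; apply: hi; apply: val_inj => /=; exact: e.
Qed.

Lemma coord (B b g b' g' : nat) : (b + g < B)%N -> (b' + g' < B)%N ->
  \sum_(a < B) \sum_(m < B) (vc b g' a m * vc b' g a m / ((a`!)%:R * (m`!)%:R))
  = if (b + g == b' + g')%N then ((b + g)`!)%:R else 0.
Proof.
move=> hB1 hB2.
case: eqP => Heq; last first.
  apply: big1 => a _; apply: big1 => m _; rewrite /vc.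
  case: ifP => [/andP[_ /eqP e1]|]; last by rewrite !mul0r.
  case: ifP => [/andP[_ /eqP e2]|]; last by rewrite mulr0 mul0r.
  exfalso; apply: Heq; lia.
pose T a := (if (a <= g)%N then b`! * g`! * 'C(g', a) * 'C(b', g - a) else 0)%N.
transitivity (\sum_(a < B) (T a)%:R : F).
  apply: eq_bigr => a _; rewrite /T.
  case: (leqP a g) => hag; last first.
    apply: big1 => m _; rewrite /vc.
    case: ifP => [/andP[_ /eqP e1]|]; last by rewrite !mul0r.
    case: ifP => [/andP[h2 _]|]; last by rewrite mulr0 mul0r.
    lia.
  have hm0 : (b + a - g' < B)%N by lia.
  rewrite (sum_single (G := fun m => vc b g' a m * vc b' g a m / ((a`!)%:R * (m`!)%:R)) hm0); last first.
    move=> m hm; rewrite /vc; case: ifP => [/andP[_ /eqP e1]|]; last by rewrite !mul0r.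
    exfalso; move/eqP: hm; lia.
  rewrite /vc.
  case: (leqP a g') => hag'; last first.
    by rewrite /= !mul0r (bin_small hag') muln0.
  case: (leqP g' (b + a)) => hgb; last first.
    have -> : (b + a == g' + (b + a - g'))%N = false by apply/eqP; lia.
    have hs : (b' < g - a)%N by lia.
    by rewrite andbF /= !mul0r (bin_small hs) muln0.
  have -> : (b + a == g' + (b + a - g'))%N by apply/eqP; lia.
  have -> : (b' + a == g + (b + a - g'))%N by apply/eqP; lia.
  rewrite hag /=.
  have E1 := bin_fact hag'.
  have hgb' : (g - a <= b')%N by lia.
  have E2 := bin_fact hgb'.
  have e3 : (b' - (g - a) = b + a - g')%N by lia.
  rewrite e3 in E2.
  rewrite -{1}E1 -{1}E2 !natrM.
  have h1 := fact_neq0 (g' - a); have h2 := fact_neq0 (g - a).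
  have h3 := fact_neq0 a; have h4 := fact_neq0 (b + a - g').
  by field; rewrite h1 h2 h3 h4.
have -> : \sum_(a < B) ((T a)%:R : F) = (\sum_(a < B) T a)%:R by rewrite natr_sum.
congr (_%:R).
have hgB : (g.+1 <= B)%N by lia.
transitivity (\sum_(a < g.+1) T a).
  rewrite (big_ord_widen B T hgB) [RHS]big_mkcond; apply: eq_bigr => i _.
  by rewrite /T ltnS; case: ifP.
rewrite /T.
transitivity (\sum_(a < g.+1) (b`! * g`! * ('C(g', a) * 'C(b', g - a))))%N.
  by apply: eq_bigr => i _; rewrite -ltnS ltn_ord mulnA.
rewrite -big_distrr /= binomial.Vandermonde.
have -> : (g' + b' = b + g)%N by lia.
by rewrite -(bin_fact (leq_addl b g)) addnK mulnC (mulnC b`!).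
Qed.

Lemma vc_conj b g a m : (vc b g a m)^* = vc b g a m.
Proof. by rewrite /vc; case: ifP; rewrite ?rmorph0 // fmorph_div !rmorph_nat. Qed.

Lemma prod_if (D : nat) (P : pred 'I_D) (G : 'I_D -> F) :
  \prod_c (if P c then G c else 0) = if [forall c, P c] then \prod_c G c else 0.
Proof.
case: (boolP [forall c, P c]) => [/forallP h|].
  by apply: eq_bigr => c _; rewrite h.
rewrite negb_forall => /existsP[c hc].
by rewrite (bigD1 c) //= (negbTE hc) mul0r.
Qed.

Lemma sum_le_bound (D : nat) (f : 'I_D -> nat) n c : (\sum_c f c = n)%N -> (f c <= n)%N.
Proof. by move=> <-; rewrite (bigD1 c) //= leq_addr. Qed.

Section Main.
Variables (I J : finType) (D n k : nat) (eb : I -> 'I_D -> nat) (eg : J -> 'I_D -> nat).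
Hypothesis ebS : forall x, (\sum_c eb x c = n)%N.
Hypothesis egS : forall y, (\sum_c eg y c = k)%N.

Local Notation B := (n + k).+1.
Local Notation Z := {ffun 'I_D -> 'I_B * 'I_B}.

Definition V x y (f : Z) : F := \prod_c vc (eb x c) (eg y c) (f c).1 (f c).2.
Definition W (f : Z) : F := \prod_c (((f c).1)`!%:R * (((f c).2)`!)%:R).

Lemma stepA x y x' y' :
  (if [forall c, eb x c + eg y c == eb x' c + eg y' c]%N
   then (\prod_c (eb x c + eg y c)`!)%:R else 0)
  = \sum_(f : Z) V x y' f * V x' y f / W f.
Proof.
transitivity (\prod_c (if (eb x c + eg y c == eb x' c + eg y' c)%N
                       then ((eb x c + eg y c)`!)%:R else 0 : F)).
  by rewrite prod_if natr_prod.
transitivity (\prod_c \sum_(u : 'I_B * 'I_B)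
   (vc (eb x c) (eg y' c) u.1 u.2 * vc (eb x' c) (eg y c) u.1 u.2 / ((u.1`!)%:R * (u.2`!)%:R))).
  apply: eq_bigr => c _.
  have h1 := sum_le_bound c (ebS x); have h2 := sum_le_bound c (egS y).
  have h3 := sum_le_bound c (ebS x'); have h4 := sum_le_bound c (egS y').
  rewrite -(pair_bigA _ (fun (a : 'I_B) (m : 'I_B) => vc (eb x c) (eg y' c) a m * vc (eb x' c) (eg y c) a m / ((a`!)%:R * (m`!)%:R))) /=.
  rewrite coord //; lia.
rewrite bigA_distr_bigA /=; apply: eq_bigr => f _.
by rewrite prodf_div big_split.
Qed.

Lemma V_conj x y f : (V x y f)^* = V x y f.
Proof. by rewrite /V rmorph_prod; apply: eq_bigr => c _; exact: vc_conj. Qed.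

Variables (p : I -> F) (q : J -> F).

Definition Y (f : Z) := \sum_x \sum_y V x y f * (p x * (q y)^*).

Lemma swap5 (A1 A2 A3 A4 A5 : finType) (G : A1 -> A2 -> A3 -> A4 -> A5 -> F) :
 \sum_a \sum_b \sum_c \sum_d \sum_e G a b c d e = \sum_e \sum_a \sum_b \sum_c \sum_d G a b c d e.
Proof.
transitivity (\sum_a \sum_b \sum_c \sum_e \sum_d G a b c d e).
  by apply: eq_bigr => a _; apply: eq_bigr => b _; apply: eq_bigr => c _; exact: exchange_big.
transitivity (\sum_a \sum_b \sum_e \sum_c \sum_d G a b c d e).
  by apply: eq_bigr => a _; apply: eq_bigr => b _; exact: exchange_big.
transitivity (\sum_a \sum_e \sum_b \sum_c \sum_d G a b c d e).
  by apply: eq_bigr => a _; exact: exchange_big.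
exact: exchange_big.
Qed.

Lemma stepB :
  \sum_x \sum_y \sum_x' \sum_y'
    ((if [forall c, eb x c + eg y c == eb x' c + eg y' c]%N
      then (\prod_c (eb x c + eg y c)`!)%:R else 0) * (p x * q y) * (p x' * q y')^*)
  = \sum_(f : Z) (W f)^-1 * (Y f * (Y f)^*).
Proof.
transitivity (\sum_x \sum_y \sum_x' \sum_y' \sum_(f : Z)
   (V x y' f * V x' y f / W f) * (p x * q y) * (p x' * q y')^*).
  apply: eq_bigr => x _; apply: eq_bigr => y _; apply: eq_bigr => x' _; apply: eq_bigr => y' _.
  by rewrite stepA !mulr_suml.
rewrite swap5; apply: eq_bigr => f _.
transitivity (\sum_x \sum_y' \sum_x' \sum_y
   (V x y' f * V x' y f / W f) * (p x * q y) * (p x' * q y')^*).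
  apply: eq_bigr => x _.
  rewrite exchange_big /=.
  transitivity (\sum_x' \sum_y' \sum_y
   (V x y' f * V x' y f / W f) * (p x * q y) * (p x' * q y')^*).
    by apply: eq_bigr => x' _; rewrite exchange_big.
  by rewrite exchange_big.
rewrite /Y mulr_suml mulr_sumr; apply: eq_bigr => x _.
rewrite mulr_suml mulr_sumr; apply: eq_bigr => y' _.
rewrite rmorph_sum mulr_sumr mulr_sumr; apply: eq_bigr => x' _.
rewrite rmorph_sum mulr_sumr mulr_sumr; apply: eq_bigr => y _.
rewrite !rmorphM /= conjCK V_conj.
ring.
Qed.

Hypothesis injb : forall x x', (forall c, eb x c = eb x' c) -> x = x'.
Hypothesis injg : forall y y', (forall c, eg y c = eg y' c) -> y = y'.

Definition hh (z : J * I) : Z := [ffun c => (inord (eg z.1 c), inord (eb z.2 c))].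

Lemma ebB x c : (eb x c < B)%N.
Proof. have := sum_le_bound c (ebS x); lia. Qed.
Lemma egB y c : (eg y c < B)%N.
Proof. have := sum_le_bound c (egS y); lia. Qed.

Lemma hh_inj : injective hh.
Proof.
move=> [y0 x0] [y1 x1] /ffunP E.
have E1 c : eg y0 c = eg y1 c /\ eb x0 c = eb x1 c.
  move: (E c); rewrite !ffunE => -[] /(congr1 val) e1 /(congr1 val) e2.
  by move: e1 e2; rewrite /= !inordK ?ebB ?egB.
by rewrite (injg (fun c => (E1 c).1)) (injb (fun c => (E1 c).2)).
Qed.

Lemma pointwise_eq (f g : 'I_D -> nat) : (forall c, f c <= g c)%N ->
  (\sum_c f c = \sum_c g c)%N -> forall c, f c = g c.
Proof.
move=> le e c; apply/eqP; rewrite eqn_leq le /= leqNgt; apply/negP => lt.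
have h := @leq_sum _ (index_enum 'I_D) (fun i => i != c) f g (fun i _ => le i).
move: e; rewrite (bigD1 c) //= [X in _ = X -> _](bigD1 c) //=.
by move=> e; have := leq_add lt h; rewrite addSn e ltnn.
Qed.

Definition KK y0 x0 : F := (\prod_c ((eb x0 c)`! * (eg y0 c)`!))%:R.

Lemma Vh x y' y0 x0 : V x y' (hh (y0, x0)) = if (x == x0) && (y' == y0) then KK y0 x0 else 0.
Proof.
rewrite /V.
transitivity (\prod_c vc (eb x c) (eg y' c) (eg y0 c) (eb x0 c)).
  by apply: eq_bigr => c _; rewrite ffunE /= !inordK ?ebB ?egB.
case: ifP => [/andP[/eqP -> /eqP ->]|hne].
  rewrite /KK natr_prod; apply: eq_bigr => c _.
  by rewrite /vc leqnn addnC eqxx /= subnn fact0 divr1.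
rewrite /vc (prod_if (fun c => (eg y0 c <= eg y' c)%N && (eb x c + eg y0 c == eg y' c + eb x0 c)%N)).
case: forallP => // H; exfalso.
have H1 c : (eg y0 c <= eg y' c)%N by case/andP: (H c).
have e1 := pointwise_eq H1 (etrans (egS y0) (esym (egS y'))).
have ey : y' = y0 by apply: injg => c; rewrite e1.
have ex : x = x0.
  apply: injb => c; case/andP: (H c) => _ /eqP; rewrite e1; lia.
by move: hne; rewrite ex ey !eqxx.
Qed.

Lemma KK_neq0 y0 x0 : KK y0 x0 != 0.
Proof. by rewrite /KK pnatr_eq0 -lt0n prodn_gt0 // => c; rewrite muln_gt0 !fact_gt0. Qed.

Lemma Gh y0 x0 : (W (hh (y0, x0)))^-1 * (Y (hh (y0, x0)) * (Y (hh (y0, x0)))^*)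
  = KK y0 x0 * (p x0 * (p x0)^*) * (q y0 * (q y0)^*).
Proof.
have -> : W (hh (y0, x0)) = KK y0 x0.
  rewrite /W /KK natr_prod; apply: eq_bigr => c _.
  by rewrite ffunE /= !inordK ?ebB ?egB // natrM mulrC.
have -> : Y (hh (y0, x0)) = KK y0 x0 * (p x0 * (q y0)^*).
  rewrite /Y (bigD1 x0) //= [X in _ + X]big1 ?addr0; last first.
    by move=> x hx; apply: big1 => y _; rewrite Vh (negbTE hx) mul0r.
  rewrite (bigD1 y0) //= [X in _ + X]big1 ?addr0; last first.
    by move=> y hy; rewrite Vh eqxx (negbTE hy) mul0r.
  by rewrite Vh !eqxx.
have hK : (KK y0 x0)^* = KK y0 x0 by rewrite /KK conjC_nat.
rewrite !rmorphM /= hK conjCK.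
have := KK_neq0 y0 x0 => nz.
by field.
Qed.

Lemma core_ineq :
  \sum_x \sum_y (\prod_c ((eb x c)`! * (eg y c)`!))%:R * (p x * (p x)^*) * (q y * (q y)^*)
  <= \sum_x \sum_y \sum_x' \sum_y'
    ((if [forall c, eb x c + eg y c == eb x' c + eg y' c]%N
      then (\prod_c (eb x c + eg y c)`!)%:R else 0) * (p x * q y) * (p x' * q y')^*).
Proof.
rewrite stepB.
set G := fun f : Z => (W f)^-1 * (Y f * (Y f)^*).
have G0 f : 0 <= G f.
  rewrite /G mulr_ge0 ?mul_conjC_ge0 // invr_ge0 /W prodr_ge0 // => c _.
  by rewrite mulr_ge0 ?ler0n.
apply: (@le_trans _ _ (\sum_(z : J * I) G (hh z))).
  rewrite exchange_big pair_bigA /=; apply: ler_sum => z _.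
  by rewrite /G Gh lexx.
rewrite -(big_imset (fun f => G f) (h := hh) (A := predT)); last by move=> z1 z2 _ _; apply: hh_inj.
rewrite [X in _ <= X](bigID (fun f => f \in [set hh z | z in predT])) /=.
by rewrite lerDl sumr_ge0 // => i _; apply: G0.
Qed.
End Main.
End Core.

Section Bridge.
Variable d : nat.

Definition ext (n : nat) (m : 'X_{1..d}) (c : 'I_d.+1) : nat :=
  if unlift ord_max c is Some i then m i else (n - mdeg m)%N.

Lemma ext_lift n m (i : 'I_d) : ext n m (lift ord_max i) = m i.
Proof. by rewrite /ext liftK. Qed.

Lemma ext_max n m : ext n m ord_max = (n - mdeg m)%N.
Proof. by rewrite /ext unlift_none. Qed.

Lemma ext_widen n m (i : 'I_d) : ext n m (widen_ord (leqnSn d) i) = m i.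
Proof.
have -> : widen_ord (leqnSn d) i = lift ord_max i by apply: val_inj; rewrite /= [RHS]lift_max.
exact: ext_lift.
Qed.

Lemma ext_sum n m : (mdeg m <= n)%N -> (\sum_c ext n m c = n)%N.
Proof.
move=> h; rewrite big_ord_recr /= ext_max.
under eq_bigr do rewrite ext_widen.
rewrite -mdegE; lia.
Qed.

Lemma ext_prod n m : (\prod_c (ext n m c)`! = mfact m * (n - mdeg m)`!)%N.
Proof.
rewrite big_ord_recr /= ext_max.
by under eq_bigr do rewrite ext_widen.
Qed.

Lemma ext_add n k x y c : (mdeg x <= n)%N -> (mdeg y <= k)%N ->
  (ext n x c + ext k y c = ext (n + k) (x + y) c)%N.
Proof.
move=> hx hy; rewrite /ext; case: (unlift ord_max c) => [i|]; first by rewrite mnmDE.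
rewrite mdegD; lia.
Qed.

Lemma ext_inj n x x' : (forall c, ext n x c = ext n x' c) -> x = x'.
Proof. by move=> h; apply/mnmP => i; have := h (lift ord_max i); rewrite !ext_lift. Qed.

Definition hn n (P : {mpoly C[d]}) : C :=
  \sum_(x : 'X_{1..d < n.+1}) (\prod_c (ext n x c)`!)%:R * (P@_x * (P@_x)^*).

Lemma sum_msupp_b (P : {mpoly C[d]}) b (G : 'X_{1..d} -> C) : (msize P <= b)%N ->
  (forall m, m \notin msupp P -> G m = 0) ->
  \sum_(m <- msupp P) G m = \sum_(m : 'X_{1..d < b}) G m.
Proof.
move=> hb hG; pose I : subFinType _ := 'X_{1..d < b}.
rewrite (big_mksub I) /=; last 2 first.
- by rewrite msupp_uniq.
- by move=> x /msize_mdeg_lt /leq_trans; apply.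
by rewrite big_rmcond //= => i; apply: hG.
Qed.

Lemma inner_b (P : {mpoly C[d]}) b : (msize P <= b)%N ->
  apolar_inner P P = \sum_(x : 'X_{1..d < b}) (mfact x)%:R * (P@_x * (P@_x)^*).
Proof.
move=> hb; rewrite /apolar_inner (sum_msupp_b (G := fun m => (mfact m)%:R * P@_m * (P@_m)^*) hb).
  by apply: eq_bigr => x _; rewrite mulrA.
by move=> m /memN_msupp_eq0 ->; rewrite mulr0 mul0r.
Qed.

Lemma coefM (P Q : {mpoly C[d]}) a b dl : (msize P <= a)%N -> (msize Q <= b)%N ->
  (P * Q)@_dl = \sum_(x : 'X_{1..d < a}) \sum_(y : 'X_{1..d < b})
      (if (x + y == dl)%MM then P@_x * Q@_y else 0).
Proof.
move=> ha hb; rewrite mpolyME big_allpairs raddf_sum /=.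
rewrite (sum_msupp_b (G := fun m1 => ((\sum_(m2 <- msupp Q) (P@_m1 * Q@_m2) *: 'X_[m1 + m2]))@_dl) ha); last first.
  move=> m /memN_msupp_eq0 h0; rewrite raddf_sum /= big1 // => m2 _.
  by rewrite h0 mul0r scale0r mcoeff0.
apply: eq_bigr => x _; rewrite raddf_sum /=.
rewrite (sum_msupp_b (G := fun m2 => ((P@_x * Q@_m2) *: 'X_[x + m2])@_dl) hb); last first.
  by move=> m /memN_msupp_eq0 h0; rewrite h0 mulr0 scale0r mcoeff0.
apply: eq_bigr => y _; rewrite mcoeffZ mcoeffX.
by case: eqP; rewrite ?mulr1 ?mulr0.
Qed.


Lemma sum_bm b (m : 'X_{1..d}) (h : (mdeg m < b)%N) (G : 'X_{1..d < b} -> C) :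
  (forall dl : 'X_{1..d < b}, val dl != m -> G dl = 0) ->
  \sum_(dl : 'X_{1..d < b}) G dl = G (BMultinom h).
Proof.
move=> hG; rewrite (bigD1 (BMultinom h)) //= big1 ?addr0 // => dl hdl.
Qed.

Lemma ext_eq n k (x x' : 'X_{1..d}) (y y' : 'X_{1..d}) :
  (mdeg x <= n)%N -> (mdeg y <= k)%N -> (mdeg x' <= n)%N -> (mdeg y' <= k)%N ->
  (x + y == x' + y')%MM = [forall c, ext n x c + ext k y c == ext n x' c + ext k y' c]%N.
Proof.
move=> h1 h2 h3 h4; apply/eqP/forallP => [e c|H].
  by rewrite !ext_add // e.
apply: (@ext_inj (n + k)) => c; have /eqP := H c; by rewrite !ext_add.
Qed.

Lemma hnM (P Q : {mpoly C[d]}) n k : (msize P <= n.+1)%N -> (msize Q <= k.+1)%N ->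
  hn (n + k) (P * Q) =
  \sum_(x : 'X_{1..d < n.+1}) \sum_(y : 'X_{1..d < k.+1})
  \sum_(x' : 'X_{1..d < n.+1}) \sum_(y' : 'X_{1..d < k.+1})
    ((if [forall c, ext n x c + ext k y c == ext n x' c + ext k y' c]%N
      then (\prod_c (ext n x c + ext k y c)`!)%:R else 0) * (P@_x * Q@_y) * (P@_x' * Q@_y')^*).
Proof.
move=> hP hQ; rewrite /hn.
transitivity (\sum_(dl : 'X_{1..d < (n + k).+1})
  \sum_(x : 'X_{1..d < n.+1}) \sum_(y : 'X_{1..d < k.+1})
  \sum_(x' : 'X_{1..d < n.+1}) \sum_(y' : 'X_{1..d < k.+1})
   (\prod_c (ext (n + k) dl c)`!)%:R *
   ((if (x + y == dl)%MM then P@_x * Q@_y else 0) * (if (x' + y' == dl)%MM then P@_x' * Q@_y' else 0)^*)).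
  apply: eq_bigr => dl _; rewrite (coefM dl hP hQ) mulr_suml mulr_sumr; apply: eq_bigr => x _.
  rewrite mulr_suml mulr_sumr; apply: eq_bigr => y _.
  rewrite rmorph_sum mulr_sumr mulr_sumr; apply: eq_bigr => x' _.
  by rewrite rmorph_sum mulr_sumr mulr_sumr.
rewrite -(swap5 (F := C)).
apply: eq_bigr => x _; apply: eq_bigr => y _; apply: eq_bigr => x' _; apply: eq_bigr => y' _.
have bx := bmdeg x; have by_ := bmdeg y; have bx' := bmdeg x'; have by' := bmdeg y'.
have hxy : (mdeg (x + y)%MM < (n + k).+1)%N by rewrite mdegD; lia.
rewrite (sum_bm hxy); last first.
  move=> dl hdl; have -> : (x + y == val dl)%MM = false by rewrite eq_sym (negbTE hdl).
  by rewrite mul0r mulr0.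
rewrite /= eqxx -(ext_eq (x := x) (y := y) (x' := x') (y' := y')); try lia.
case: eqP => [e|ne]; case: eqP => [e'|ne'] //.
- rewrite mulrA; congr (_ * _ * _); congr (_%:R); apply: eq_bigr => c _.
  by rewrite ext_add //; lia.
- by exfalso; apply: ne'; rewrite e.
- by exfalso; apply: ne; rewrite e'.
- by rewrite rmorph0 !mulr0 !mul0r.
Qed.


Lemma hn_mul (P Q : {mpoly C[d]}) n k : (msize P <= n.+1)%N -> (msize Q <= k.+1)%N ->
  hn n P * hn k Q <= hn (n + k) (P * Q).
Proof.
move=> hP hQ; rewrite hnM //.
have ebS (x : 'X_{1..d < n.+1}) : (\sum_c ext n x c = n)%N.
  by apply: ext_sum; have := bmdeg x; lia.
have egS (y : 'X_{1..d < k.+1}) : (\sum_c ext k y c = k)%N.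
  by apply: ext_sum; have := bmdeg y; lia.
have injb (x x' : 'X_{1..d < n.+1}) : (forall c, ext n x c = ext n x' c) -> x = x'.
  by move=> h; apply: val_inj; apply: ext_inj h.
have injg (y y' : 'X_{1..d < k.+1}) : (forall c, ext k y c = ext k y' c) -> y = y'.
  by move=> h; apply: val_inj; apply: ext_inj h.
have := core_ineq ebS egS (fun x => P@_x) (fun y => Q@_y) injb injg.
apply: le_trans; rewrite le_eqVlt; apply/orP; left; apply/eqP.
rewrite /hn mulr_suml; apply: eq_bigr => x _; rewrite mulr_sumr; apply: eq_bigr => y _.
rewrite big_split /= natrM; ring.
Qed.

Lemma hn_ge0 n (P : {mpoly C[d]}) : 0 <= hn n P.
Proof. by rewrite /hn sumr_ge0 // => x _; rewrite mulr_ge0 ?ler0n ?mul_conjC_ge0. Qed.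

Lemma inner_ge0 (P : {mpoly C[d]}) : 0 <= apolar_inner P P.
Proof. by rewrite /apolar_inner sumr_ge0 // => x _; rewrite -mulrA mulr_ge0 ?ler0n ?mul_conjC_ge0. Qed.

Lemma inner_le_hn n (P : {mpoly C[d]}) : (msize P <= n.+1)%N -> apolar_inner P P <= hn n P.
Proof.
move=> hP; rewrite (inner_b hP) /hn; apply: ler_sum => x _.
rewrite ler_wpM2r ?mul_conjC_ge0 // ler_nat ext_prod.
by rewrite leq_pmulr // fact_gt0.
Qed.

Lemma hn_le_inner n (P : {mpoly C[d]}) : (msize P <= n.+1)%N -> hn n P <= (n`!)%:R * apolar_inner P P.
Proof.
move=> hP; rewrite (inner_b hP) /hn mulr_sumr; apply: ler_sum => x _.
rewrite [X in _ <= X]mulrA -natrM ler_wpM2r ?mul_conjC_ge0 // ler_nat ext_prod mulnC.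
by rewrite leq_mul2r leq_fact ?leq_subr ?orbT.
Qed.


Lemma msize_mul_le (A B : {mpoly C[d]}) a b : (msize A <= a.+1)%N -> (msize B <= b.+1)%N ->
  (msize (A * B) <= (a + b).+1)%N.
Proof.
have [->|nA] := eqVneq A 0; first by rewrite mul0r msize0.
have [->|nB] := eqVneq B 0; first by rewrite mulr0 msize0.
rewrite msizeM // -subn1 leq_subLR => hA hB; apply: leq_trans (leq_add hA hB) _; lia.
Qed.

Lemma induct s (P : 'I_s -> {mpoly C[d]}) :
  (msize (\prod_(i < s) P i) <= (\sum_(i < s) tdeg (P i)).+1)%N /\
  \prod_(i < s) hn (tdeg (P i)) (P i) <= hn (\sum_(i < s) tdeg (P i)) (\prod_(i < s) P i).
Proof.
elim: s P => [|s IH] P.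
  rewrite !big_ord0 msize1; split => //.
  apply: le_trans (inner_le_hn _); last by rewrite msize1.
  rewrite /apolar_inner msupp1 big_seq1 mcoeff1 eqxx /mfact big1 ?mul1r ?rmorph1 ?mulr1 //.
  by move=> i _; rewrite mnm0E.
rewrite !big_ord_recr /=.
have [h1 h2] := IH (fun i => P (widen_ord (leqnSn s) i)).
have hP : (msize (P ord_max) <= (tdeg (P ord_max)).+1)%N by rewrite /tdeg leqSpred.
split; first exact: msize_mul_le.
apply: le_trans (hn_mul h1 hP).
by rewrite ler_wpM2r ?hn_ge0.
Qed.

End Bridge.

Theorem theorem3p1 (d s : nat) (P : 'I_s -> {mpoly C[d]}) :
  (1 <= s)%N ->
  (forall i, P i != 0) ->
  \prod_(i < s) apolar_norm (P i) ^+ 2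
    <= ((\sum_(i < s) tdeg (P i))`!)%:R * apolar_norm (\prod_(i < s) P i) ^+ 2.
Proof.
move=> _ _; rewrite /apolar_norm sqrtCK.
under eq_bigr do rewrite sqrtCK.
have [h1 h2] := induct P.
apply: le_trans (hn_le_inner h1).
apply: le_trans h2.
apply: ler_prod => i _; rewrite inner_ge0 inner_le_hn //.
by rewrite /tdeg leqSpred.
Qed.
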